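(* For every digraph $X$, the number of Hamiltonian paths of $X$ and the number of Hamiltonian paths of its complementary digraph $\overline{X}$ have the same parity.
   Context: A digraph $X=(V,E)$: $V$ finite, $E\subset\{(u,v)\in V\times V\mid u\ne v\}$; $\overline{X}=(V,E^c)$ with $(u,v)\in E^c$ iff $u\ne v$ and $(u,v)\notin E$. A Hamiltonian path of $X$ is a listing $(\sigma_1,\dots,\sigma_n)$ of all vertices of $V$ without repetition ($n=|V|$) such that $(\sigma_j,\sigma_{j+1})\in E$ for all $j=1,\dots,n-1$. *)

(* Defs.v *)
From mathcomp Require Import all_boot.
Set Implicit Arguments. Unset Strict Implicit. Unset Printing Implicit Defensive.

Definition loopless (V : finType) (E : rel V) : Prop := irreflexive E.

Definition compl_rel (V : finType) (E : rel V) : rel V :=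
  fun u v => (u != v) && ~~ E u v.

(* Hamiltonian path: a listing (s_1,...,s_n) of all n = |V| vertices without
   repetition such that (s_j, s_{j+1}) is an edge for all j.
   ([sorted E s] says exactly that E holds between consecutive entries.) *)
Definition is_ham_path (V : finType) (E : rel V) (s : #|V|.-tuple V) : bool :=
  uniq s && sorted E s.

Definition num_ham_paths (V : finType) (E : rel V) : nat :=
  #|[set s : #|V|.-tuple V | is_ham_path E s]|.

(* Main.v *)
Require Import Defs.
From mathcomp Require Import all_boot all_algebra zify.
Import GRing.Theory.
Set Implicit Arguments. Unset Strict Implicit. Unset Printing Implicit Defensive.

Section Proof.
Local Open Scope ring_scope.
Variable V : finType.
Local Notation F := 'Z_2.

Lemma F2_2 : (1 + 1 : F) = 0. Proof. by apply/eqP. Qed.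
Lemma addxx (x : F) : x + x = 0.
Proof. by rewrite -mulr2n -mulr_natl (_ : 2%:R = 0 :> F) ?mul0r //; apply/eqP. Qed.

Fixpoint pc (R : rel V) (k : nat) (x : V) (A : {set V}) : F :=
  match k with
  | 0 => (A == [set x])%:R
  | k'.+1 => (x \in A)%:R * \sum_(y | R x y) pc R k' y (A :\ x)
  end.

Lemma sum_tupleS k (f : k.+1.-tuple V -> F) :
  \sum_(t : k.+1.-tuple V) f t = \sum_(x : V) \sum_(t : k.-tuple V) f [tuple of x :: t].
Proof.
rewrite pair_big /=.
rewrite (reindex (fun p : V * k.-tuple V => [tuple of p.1 :: p.2])) //=.
exists (fun t : k.+1.-tuple V => (thead t, behead_tuple t)) => [[x t] _|t _] /=.
  by congr pair; apply: val_inj.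
by rewrite -tuple_eta.
Qed.

Lemma set1_neq0 (x : V) : ([set x] == set0) = false.
Proof. by apply/negP => /eqP h; have := set11 x; rewrite h inE. Qed.

Lemma cons_bool (R : rel V) x (A : {set V}) (s : seq V) (P : bool) :
  (x \in A) && (uniq s && P && ([set:: s] == A :\ x)) =
  uniq (x :: s) && P && ([set:: x :: s] == A).
Proof.
rewrite set_cons cons_uniq.
case xA: (x \in A) => /=.
  case hs: ([set:: s] == A :\ x).
    have xs : x \notin s.
      apply/negP => xs; move/eqP: hs => hs.
      have : x \in [set:: s] by rewrite inE.
      by rewrite hs !inE eqxx.
    move/eqP: hs => ->; by rewrite xs setD1K // eqxx !andbT.
  rewrite andbF; apply/esym/negP => /andP [/andP [/andP [xs _] _] /eqP e].
  by move: hs; rewrite -e setU1K ?eqxx // inE.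
apply/esym/negP => /andP [_ /eqP e].
by move: xA; rewrite -e setU11.
Qed.

Lemma pcE R k x (A : {set V}) : pc R k x A =
  \sum_(t : k.-tuple V) (uniq (x :: t) && path R x t && ([set:: x :: t] == A))%:R.
Proof.
elim: k x A => [|k IH] x A /=.
  rewrite (big_pred1 [tuple]) /=; last by move=> t; symmetry; apply/eqP; exact: tuple0.
  congr (_%:R); rewrite /= eq_sym; congr (_ == _).
  by apply/setP => z; rewrite !inE.
rewrite sum_tupleS big_mkcond mulr_sumr; apply: eq_bigr => y _.
case Rxy: (R x y); last first.
  rewrite mulr0; symmetry; apply: big1 => t _ /=.
  by rewrite Rxy andbF.
rewrite IH mulr_sumr; apply: eq_bigr => t _ /=.
rewrite -natrM mulnb Rxy /=.
by rewrite (cons_bool R).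
Qed.

Definition h R x (A : {set V}) := pc R (#|A|.-1) x A.
Definition H R (A : {set V}) := \sum_x h R x A.
Definition G R (A : {set V}) := (A == set0)%:R + H R A.

Lemma h_out R x (A : {set V}) : x \notin A -> h R x A = 0.
Proof.
rewrite /h; case: (#|A|.-1) => [|k] /= xA.
  case e: (A == [set x]) => //; move/eqP: e xA => ->; by rewrite set11.
by rewrite (negbTE xA) mul0r.
Qed.

Lemma H0 R : H R set0 = 0.
Proof. by apply: big1 => x _; rewrite h_out // inE. Qed.

Lemma G0 R : G R set0 = 1.
Proof. by rewrite /G H0 eqxx addr0. Qed.

Lemma h_rec R x (A : {set V}) : x \in A ->
  h R x A = (A :\ x == set0)%:R + \sum_(y | R x y) h R y (A :\ x).
Proof.
move=> xA; rewrite {1}/h (cardsD1 x A) xA add1n /=.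
case e: #|A :\ x| => [|m] /=.
  have e0 := cards0_eq e.
  rewrite e0 eqxx big1 ?addr0; last first.
    by move=> y _; rewrite /h cards0 /= eq_sym set1_neq0.
  have -> : A = [set x] by rewrite -(setD1K xA) e0 setU0.
  by rewrite eqxx.
have ne : (A :\ x == set0) = false.
  by apply/negP => /eqP e0; move: e; rewrite e0 cards0.
by rewrite ne xA mul1r add0r /h e.
Qed.

Variable E : rel V.
Hypothesis HE : irreflexive E.
Local Notation Ec := (compl_rel E).

Lemma g_rec x (A : {set V}) : x \in A ->
  h Ec x A = G Ec (A :\ x) + \sum_(y | E x y) h Ec y (A :\ x).
Proof.
move=> xA; rewrite h_rec // /G -addrA; congr (_ + _).
rewrite /H (big_mkcond (fun y => Ec x y)) (big_mkcond (fun y => E x y)) -big_split /=.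
apply: eq_bigr => y _.
case: (eqVneq y x) => [->|nyx].
  rewrite h_out; last by rewrite !inE eqxx.
  by case: (Ec x x); case: (E x x); rewrite ?addr0.
rewrite /compl_rel eq_sym nyx /=.
by case: (E x y); rewrite /= ?addxx ?addr0.
Qed.

Lemma reindexD1 x (A : {set V}) (f : {set V} -> F) : x \in A ->
  \sum_(C : {set V} | (C \subset A) && (x \in C)) f C = \sum_(C : {set V} | C \subset A :\ x) f (x |: C).
Proof.
move=> xA.
rewrite (reindex_onto (fun C => x |: C) (fun C => C :\ x)); last first.
  by move=> C /andP [_ xC]; rewrite setD1K.
apply: eq_bigl => C.
rewrite setU11 andbT subsetD1 subUset sub1set xA /=.
case xC: (x \in C) => /=.
  rewrite andbF; apply/negP => /andP [_ /eqP e]; move: xC; by rewrite -e !inE eqxx.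
by rewrite setU1K ?eqxx // xC.
Qed.

Lemma L1 (A : {set V}) x : h Ec x A = \sum_(C : {set V} | C \subset A) h E x C * G Ec (A :\: C).
Proof.
elim: {A}_.+1 {-2}A (ltnSn #|A|) x => // n IH A ltA x.
case xA: (x \in A); last first.
  rewrite h_out ?xA //; symmetry; apply: big1 => C sCA.
  rewrite h_out ?mul0r //; apply/negP => xC.
  by move: xA; rewrite (subsetP sCA x xC).
rewrite g_rec //.
rewrite [RHS](bigID (fun C : {set V} => x \in C)) /=.
rewrite [X in _ = _ + X]big1 ?addr0; last first.
  by move=> C /andP [_ xC]; rewrite h_out ?mul0r ?xC.
have ltAx : (#|A :\ x| < n)%N.
  by move: ltA; rewrite (cardsD1 x A) xA.
under eq_bigr => y _ do rewrite (IH _ ltAx).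
under [X in _ = X]eq_bigr => C /andP [_ xC] do rewrite h_rec // mulrDl.
rewrite big_split /=; congr (_ + _).
  rewrite (bigD1 [set x]) /=; last by rewrite sub1set xA set11.
  rewrite setDv eqxx mul1r big1 ?addr0 //.
  move=> C /andP [/andP [_ xC] nC].
  case e: (C :\ x == set0); last by rewrite mul0r.
  move/eqP: e => e; move: nC; by rewrite -(setD1K xC) e setU0 eqxx.
rewrite [RHS](eq_bigr (fun C : {set V} => \sum_(y | E x y) h E y (C :\ x) * G Ec (A :\: C))); last by move=> C _; rewrite mulr_suml.
rewrite [RHS]exchange_big /=; apply: eq_bigr => y _.
rewrite reindexD1 //; apply: eq_big => C; first by [].
move=> sC.
have xC : x \notin C by move: sC; rewrite subsetD1 => /andP [].
by rewrite setU1K // setDDl.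
Qed.

Lemma L2 (A : {set V}) : A != set0 -> G Ec A = \sum_(C : {set V} | C \subset A) H E C * G Ec (A :\: C).
Proof.
move=> nA; rewrite /G (negbTE nA) add0r /H.
under eq_bigr => x _ do rewrite L1.
rewrite exchange_big /=; apply: eq_bigr => C _.
by rewrite mulr_suml.
Qed.

Lemma L3 (A : {set V}) : A != set0 -> G Ec A = H E A.
Proof.
elim: {A}_.+1 {-2}A (ltnSn #|A|) => // n IH A ltA nA.
rewrite L2 // (bigD1 A) //= setDv G0 mulr1.
rewrite -[RHS]addr0; congr (_ + _).
have -> : \sum_(C : {set V} | (C \subset A) && (C != A)) H E C * G Ec (A :\: C) =
          \sum_(C : {set V} | (C \subset A) && (C != A)) H E C * H E (A :\: C).
  apply: eq_bigr => C /andP [sCA nCA].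
  case C0: (C == set0); first by move/eqP: C0 => ->; rewrite H0 !mul0r.
  have nAC : A :\: C != set0.
    rewrite setD_eq0; apply/negP => sAC; move: nCA.
    by rewrite eqEsubset sCA sAC.
  congr (_ * _); apply: IH => //.
  rewrite cardsD (setIidPr sCA).
  have : (0 < #|C|)%N by rewrite card_gt0 C0.
  have : (#|C| <= #|A|)%N by apply: subset_leq_card.
  move: ltA; move: #|A| #|C| => a c; lia.
have -> : \sum_(C : {set V} | (C \subset A) && (C != A)) H E C * H E (A :\: C) =
          \sum_(C : {set V} | C \subset A) H E C * H E (A :\: C).
  by rewrite [RHS](bigD1 A) //= setDv H0 mulr0 add0r.
case/set0Pn: nA => x0 x0A.
rewrite (bigID (fun C : {set V} => x0 \in C)) /=.
rewrite (reindex_onto (fun C : {set V} => A :\: C) (fun C : {set V} => A :\: C)) /=; last first.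
  by move=> C /andP [sCA _]; rewrite setDDr setDv set0U (setIidPr sCA).
rewrite -[RHS](addxx (\sum_(C : {set V} | (C \subset A) && (x0 \notin C)) H E C * H E (A :\: C))).
congr (_ + _); apply: eq_big => C.
  rewrite subsetDl /= in_setD x0A andbT setDDr setDv set0U.
  case sCA: (C \subset A); first by rewrite (setIidPr sCA) eqxx andbT.
  rewrite /=; apply/negbTE/negP => /andP [_ /eqP e].
  by move: sCA; rewrite -e subsetIl.
by move=> /andP [_ /eqP ->]; rewrite mulrC.
Qed.

Lemma GEq (A : {set V}) : G Ec A = G E A.
Proof.
case A0: (A == set0); first by move/eqP: A0 => ->; rewrite !G0.
by rewrite L3 ?A0 // /G A0 add0r.
Qed.

Lemma hamsum R n (hn : n = #|V|) :
  \sum_(s : n.-tuple V) (uniq s && sorted R s)%:R = G R setT.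
Proof.
case: n hn => [|k] hn.
  rewrite (big_pred1 [tuple]) /=; last by move=> t; symmetry; apply/eqP; exact: tuple0.
  have -> : [set: V] = set0 by apply: cards0_eq; rewrite cardsT -hn.
  by rewrite G0.
have nT : ([set: V] == set0) = false.
  apply/negP => /eqP e; have : #|[set: V]| = 0%N by rewrite e cards0.
  by rewrite cardsT -hn.
rewrite /G nT add0r /H sum_tupleS; apply: eq_bigr => x _.
rewrite /h cardsT -hn /= pcE; apply: eq_bigr => t _.
have [u|nu] := boolP (uniq (x :: t)); last by move: nu; rewrite /= => /negbTE ->.
have -> : [set:: x :: t] == [set: V]; last by move: u; rewrite /= => ->; rewrite andbT.
rewrite eqEcard subsetT /= cardsT -hn cardsE.
by move/card_uniqP: u => ->; rewrite /= size_tuple.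
Qed.

End Proof.

Local Open Scope ring_scope.

Lemma natZ2 n : (n%:R : 'Z_2) = (odd n)%:R.
Proof.
elim: n => // n IH; rewrite GRing.mulrS IH /=.
by case: (odd n); apply/eqP.
Qed.

Theorem mainTheorem16 (V : finType) (E : rel V) (HE : loopless E) :
  odd (num_ham_paths E) = odd (num_ham_paths (compl_rel E)).
Proof.
have cardF R : ((num_ham_paths R)%:R : 'Z_2) =
    (\sum_(s : #|V|.-tuple V) (uniq s && sorted R s)%:R)%R.
  rewrite /num_ham_paths -sum1_card GRing.natr_sum big_mkcond /=.
  
  apply: eq_bigr => s _; rewrite inE /is_ham_path.
  
  by case: (_ && _).
have key : ((num_ham_paths E)%:R : 'Z_2) = (num_ham_paths (compl_rel E))%:R.
  rewrite !cardF.
  rewrite (hamsum E erefl).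
  rewrite (hamsum (compl_rel E) erefl).
  by rewrite (@GEq V E).
move: key; rewrite (natZ2 (num_ham_paths E)) (natZ2 (num_ham_paths (compl_rel E))).
case: (odd (num_ham_paths E)); case: (odd (num_ham_paths (compl_rel E))) => // /eqP; by [].
Qed.
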